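(* Let $\mathcal{G}=\langle V,E,T\rangle$ be an OMVPP $k$-grabbing pawn game and let $c$ be an initial configuration from which Player 1 wins. Then Player 1 has a strategy such that, for every Player 2 strategy, the resulting play reaches a vertex of $T$ within $|V|\cdot(k+1)$ rounds.
   Context: A pawn game with $d$ pawns consists of a finite directed graph $(V,E)$, a target set $T\subseteq V$, and sets $V_1,\dots,V_d\subseteq V$ with $V_1\cup\dots\cup V_d=V$ (possibly overlapping: OMVPP), where Pawn $j$ owns $V_j$. Player 1 moves the token from $v$ (along an edge) iff he controls at least one pawn owning $v$; otherwise Player 2 moves. In the $k$-grabbing mechanism, configurations are $\langle v,P,r\rangle$ with $v$ the token position, $P\subseteq[d]$ the pawns controlled by Player 1, and $r\in\{0,\dots,k\}$ the number of remaining grabs; initially $r=k$. A round consists of one move of the token followed by Player 1's option to grab: either do nothing or, if $r>0$, take a pawn $j\notin P$, moving to $P\cup\{j\}$ and $r-1$; grabbed pawns stay with Player 1 forever and Player 2 never grabs. Player 1 wins a play iff it visits $T$; Player 1 wins from a configuration if he has a strategy winning against all Player 2 strategies. *)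

(* Defs.v *)
From mathcomp Require Import all_boot.
Set Implicit Arguments. Unset Strict Implicit. Unset Printing Implicit Defensive.

Section PawnGame.
Variables (V : finType) (E : rel V) (d : nat) (Own : 'I_d -> {set V}).

(* configuration <v, P, r> : token position, pawns of Player 1, grabs left *)
Definition conf := (V * {set 'I_d} * nat)%type.
Definition cpos (c : conf) : V := c.1.1.
Definition cpawns (c : conf) : {set 'I_d} := c.1.2.
Definition cgrabs (c : conf) : nat := c.2.

Definition controls (P : {set 'I_d}) (v : V) : bool :=
  [exists j in P, v \in Own j].

(* General (history-dependent) strategies.  A history is the sequence of
   previous configurations; the current configuration is given separately. *)
Record strat1 := Strat1 {
  s1move : seq conf -> conf -> V;
  s1grab : seq conf -> conf -> V -> option 'I_d;
  s1move_ok : forall h c, E (cpos c) (s1move h c);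
  s1grab_ok : forall h c u j, s1grab h c u = Some j ->
                0 < cgrabs c /\ j \notin cpawns c }.

Record strat2 := Strat2 {
  s2move : seq conf -> conf -> V;
  s2move_ok : forall h c, E (cpos c) (s2move h c) }.

Definition step (s1 : strat1) (s2 : strat2) (h : seq conf) (c : conf) : conf :=
  let u := if controls (cpawns c) (cpos c) then s1move s1 h c
           else s2move s2 h c in
  match s1grab s1 h c u with
  | Some j => (u, j |: cpawns c, (cgrabs c).-1)
  | None => (u, cpawns c, cgrabs c)
  end.

Fixpoint run (s1 : strat1) (s2 : strat2) (c0 : conf) (n : nat) : seq conf * conf :=
  match n with
  | 0 => ([::], c0)
  | n'.+1 => let hc := run s1 s2 c0 n' in
             (rcons hc.1 hc.2, step s1 s2 hc.1 hc.2)
  end.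

Definition play (s1 : strat1) (s2 : strat2) (c0 : conf) (n : nat) : conf :=
  (run s1 s2 c0 n).2.

Definition wins1 (T : {set V}) (c0 : conf) : Prop :=
  exists s1 : strat1, forall s2 : strat2,
    exists n, cpos (play s1 s2 c0 n) \in T.

End PawnGame.

(* Main.v *)
Require Import Defs.
From mathcomp Require Import all_boot.
From mathcomp Require Import zify.
Set Implicit Arguments. Unset Strict Implicit. Unset Printing Implicit Defensive.

Lemma iter_stable (U : finType) (F : {set U} -> {set U}) A0 j :
  iter j.+1 F A0 = iter j F A0 -> forall m, iter (j + m) F A0 = iter j F A0.
Proof.
move=> H; elim=> [|m IH]; first by rewrite addn0.
by rewrite addnS iterS IH -iterS H.
Qed.

Lemma iter_fix (U : finType) (F : {set U} -> {set U})
  (ext : forall A : {set U}, A \subset F A) A0 : iter #|U|.+1 F A0 = iter #|U| F A0.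
Proof.
have key : forall i, (exists2 j, j < i & iter j.+1 F A0 = iter j F A0)
                     \/ i <= #|iter i F A0|.
  elim=> [|i [[j ji Hj]|IH]]; first by right.
    by left; exists j => //; apply: ltnW.
  case: (eqVneq (iter i.+1 F A0) (iter i F A0)) => Heq; first by left; exists i.
  right.
  have pr : iter i F A0 \proper iter i.+1 F A0.
    by rewrite properEneq eq_sym Heq /=; exact: ext.
  exact: leq_ltn_trans IH (proper_card pr).
case: (key #|U|.+1) => [[j ji Hj]|H].
  have S := iter_stable Hj.
  have E1 := subnKC (ji : j <= #|U|).
  by rewrite -E1 -addnS !S.
by have := leq_trans H (max_card _); rewrite ltnn.
Qed.

Section Proof.
Variables (V : finType) (E : rel V) (T : {set V}) (d : nat) (Own : 'I_d -> {set V}).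
Hypothesis Hsucc : forall v : V, exists u : V, E v u.

Definition Fl (P : {set 'I_d}) (X : pred V) (A : {set V}) : {set V} :=
  A :|: [set v | if controls Own P v then [exists u, E v u && ((u \in A) || X u)]
                 else [forall u, E v u ==> ((u \in A) || X u)]].

Fixpoint Win (r : nat) (P : {set 'I_d}) : {set V} :=
  iter #|V| (Fl P (fun u => if r is r'.+1 then
     [exists j, (j \notin P) && (u \in Win r' (j |: P))] else false)) T.

Definition exitb r (P : {set 'I_d}) (u : V) : bool := if r is r'.+1 then
     [exists j, (j \notin P) && (u \in Win r' (j |: P))] else false.
Definition Al r (P : {set 'I_d}) i := iter i (Fl P (exitb r P)) T.
Lemma WinE r P : Win r P = Al r P #|V|.
Proof. by case: r. Qed.

Lemma Al_mono r P i j : i <= j -> Al r P i \subset Al r P j.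
Proof.
move/subnKC <-; elim: (j - i) => [|m IH]; first by rewrite addn0.
rewrite addnS /Al iterS; apply: subset_trans IH (subsetUl _ _).
Qed.

Lemma Al_fix r P : Al r P #|V|.+1 = Al r P #|V|.
Proof. apply: iter_fix => A; exact: subsetUl. Qed.

Definition lvl r (P : {set 'I_d}) v := find (fun i => v \in Al r P i) (iota 0 #|V|.+1).

Lemma lvl_spec r P v : v \in Win r P ->
  [/\ lvl r P v <= #|V|, v \in Al r P (lvl r P v) &
      forall i, i < lvl r P v -> v \notin Al r P i].
Proof.
move=> Hv.
have Hh : has (fun i => v \in Al r P i) (iota 0 #|V|.+1).
  apply/hasP; exists #|V|.
    by rewrite mem_iota leq0n add0n ltnSn.
  by rewrite -WinE.
have Hlt := Hh; rewrite has_find size_iota in Hlt.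
split.
- exact: Hlt.
- by have := nth_find 0 Hh; rewrite nth_iota.
move=> i Hi; have := before_find 0 Hi; rewrite nth_iota ?add0n => [->//|].
exact: ltn_trans Hi Hlt.
Qed.

Lemma lvl_le r P u i : u \in Al r P i -> i <= #|V| -> lvl r P u <= i.
Proof.
move=> Hu Hi; case: leqP => // Hlt.
have := before_find 0 Hlt; rewrite nth_iota ?add0n ?Hu //.
Qed.


Definition dflt (v : V) : V := xchoose (Hsucc v).

Definition s1mv (c : conf V d) : V :=
  let v := cpos c in let P := cpawns c in let r := cgrabs c in
  odflt (dflt v) [pick u | E v u && ((u \in Al r P (lvl r P v).-1) || exitb r P u)].
Definition s1gr (c : conf V d) (u : V) : option 'I_d :=
  if cgrabs c is r'.+1 then
    [pick j | (j \notin cpawns c) && (u \in Win r' (j |: cpawns c))]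
  else None.

Lemma s1mv_ok (h : seq (conf V d)) c : E (cpos c) (s1mv c).
Proof.
rewrite /s1mv; case: pickP => [u /andP[] //|_] /=; exact: xchooseP.
Qed.

Lemma s1gr_ok (h : seq (conf V d)) c u j : s1gr c u = Some j ->
  0 < cgrabs c /\ j \notin cpawns c.
Proof.
rewrite /s1gr; case: (cgrabs c) => // r; case: pickP => // j' /andP[Hj _] [<-].
by [].
Qed.

Definition S1 : strat1 E d :=
  @Strat1 V E d (fun _ => s1mv) (fun _ => s1gr) s1mv_ok s1gr_ok.

Definition goodc (c : conf V d) (u : V) :=
  (u \in Win (cgrabs c) (cpawns c)) || exitb (cgrabs c) (cpawns c) u.
Definition s2mv (c : conf V d) : V :=
  odflt (dflt (cpos c)) [pick u | E (cpos c) u && ~~ goodc c u].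
Lemma s2mv_ok (h : seq (conf V d)) c : E (cpos c) (s2mv c).
Proof.
rewrite /s2mv; case: pickP => [u /andP[] //|_] /=; exact: xchooseP.
Qed.
Definition S2 : strat2 E d := @Strat2 V E d (fun _ => s2mv) s2mv_ok.

Lemma playS (s1 : strat1 E d) (s2 : strat2 E d) c0 m :
  play Own s1 s2 c0 m.+1 = step Own s1 s2 (run Own s1 s2 c0 m).1 (play Own s1 s2 c0 m).
Proof. by []. Qed.

Definition Good (s2 : strat2 E d) c0 r := forall P v m,
  play Own S1 s2 c0 m = (v, P, r) -> v \in Win r P ->
  exists n, n <= lvl r P v + #|V| * r /\ cpos (play Own S1 s2 c0 (m + n)) \in T.

Lemma inner s2 c0 r : (forall r', r = r'.+1 -> Good s2 c0 r') -> Good s2 c0 r.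
Proof.
move=> IHr P v m Hm Hv.
suff: forall n v m, lvl r P v <= n -> play Own S1 s2 c0 m = (v, P, r) ->
  v \in Win r P ->
  exists n', n' <= n + #|V| * r /\ cpos (play Own S1 s2 c0 (m + n')) \in T.
  by move/(_ _ v m (leqnn _) Hm Hv).
clear v m Hm Hv.
elim=> [|n IHn] v m Hl Hm Hv; have [Hle Hin Hbef] := lvl_spec Hv.
  exists 0; rewrite addn0 Hm /=.
  by move: Hl Hin; rewrite leqn0 => /eqP ->.
case: (leqP (lvl r P v) n) => Hln.
  have [n' [Hn' HT]] := IHn v m Hln Hm Hv.
  by exists n'; split => //; apply: leq_trans Hn' _; rewrite leq_add2r.
have El : lvl r P v = n.+1 by apply/eqP; rewrite eqn_leq Hl Hln.
rewrite El in Hin.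
have Hn : v \notin Al r P n by apply: Hbef; rewrite El.
have Hst : v \in Fl P (exitb r P) (Al r P n) := Hin.
move: Hst; rewrite /Fl in_setU (negbTE Hn) /= inE => Hst.
have Hp := playS S1 s2 c0 m.
rewrite Hm /step /= in Hp.
set u := (if _ then _ else _) in Hp.
have Hu : E v u && ((u \in Al r P n) || exitb r P u).
  rewrite /u /=; case: ifP Hst => Hc Hst.
    rewrite /s1mv /= El /=; case: pickP => [u' //|Hnone].
    by move/existsP: Hst => [u' Hu']; rewrite Hnone in Hu'.
  have He := s2move_ok s2 (run Own S1 s2 c0 m).1 (v, P, r).
  by move/forallP: Hst => /(_ (s2move s2 (run Own S1 s2 c0 m).1 (v, P, r))); rewrite He.
case/andP: Hu => Hvu Hu.
have Hnle : n <= #|V| by apply: ltnW; rewrite -El.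
case Hg: (s1gr (v, P, r) u) Hp => [j|] Hp.
  destruct r as [|r']; first by [].
  move: Hg; rewrite /s1gr /=; case: pickP => // j' /andP[Hj Hw] [Ej]; subst j'.
  simpl in Hp.
  have [Hle' _ _] := lvl_spec Hw.
  have [n' [Hn' HT]] := IHr r' erefl (j |: P) u m.+1 Hp Hw.
  exists n'.+1; rewrite addnS -addSn; split => //.
  rewrite /cpawns /= in Hle'; rewrite mulnS; move: Hle' Hn'; set x := #|V| * r'; set y := lvl _ _ _; lia.
have Hx : ~~ exitb r P u.
  destruct r as [|r']; first by [].
  move: Hg; rewrite /s1gr /= => Hg; apply/existsP => [[j Hj]].
  by move: Hg; case: pickP => [j' _ //| H]; rewrite H in Hj.
rewrite (negbTE Hx) orbF in Hu.
simpl in Hp.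
have Hlu := lvl_le Hu Hnle.
have Hwu : u \in Win r P by rewrite WinE; apply: (subsetP (Al_mono r P Hnle)).
have [n' [Hn' HT]] := IHn u m.+1 Hlu Hp Hwu.
exists n'.+1; rewrite addnS -addSn; split => //.
Qed.

Lemma sound s2 c0 r : Good s2 c0 r.
Proof.
elim: r => [|r IH]; apply: inner => // r' [<-] //.
Qed.

Lemma complete (s1 : strat1 E d) c0 :
  cpos c0 \notin Win (cgrabs c0) (cpawns c0) ->
  forall m, cpos (play Own s1 S2 c0 m) \notin
            Win (cgrabs (play Own s1 S2 c0 m)) (cpawns (play Own s1 S2 c0 m)).
Proof.
move=> H0; elim=> // m IH.
rewrite playS.
move: (run Own s1 S2 c0 m).1 (play Own s1 S2 c0 m) IH => h [[v P] r] /= Hv.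
have Hv' : v \notin Fl P (exitb r P) (Al r P #|V|).
  by rewrite -[Fl _ _ _]/(Al r P #|V|.+1) Al_fix -WinE.
move: Hv'; rewrite /Fl in_setU negb_or inE => /andP[_ Hst].
rewrite /step /=.
set u := (if _ then _ else _).
have Hu : ~~ ((u \in Win r P) || exitb r P u).
  rewrite /u; case: ifP Hst => Hc Hst.
    have He := s1move_ok s1 h (v, P, r).
    apply/negP => Hg; move/negP: Hst; apply; apply/existsP.
    by exists (s1move s1 h (v, P, r)); rewrite He -WinE.
  rewrite /= /s2mv /=; case: pickP => [u' /andP[_ //]|Hnone].
  exfalso; move/negP: Hst; apply; apply/forallP => u'.
  by case: (E v u') (Hnone u') => //=; rewrite /goodc /= WinE => /negbFE.
case Hg: (s1grab s1 h (v, P, r) u) => [j|] /=.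
  have [Hr Hj] := s1grab_ok Hg.
  destruct r as [|r']; first by [].
  apply/negP => Hw; move/negP: Hu; apply; apply/orP; right.
  by apply/existsP; exists j; rewrite Hj Hw.
by move: Hu; rewrite negb_or => /andP[].
Qed.


End Proof.

Theorem lemma34 (V : finType) (E : rel V) (T : {set V}) (d : nat)
    (Own : 'I_d -> {set V}) (k : nat)
    (Hcover : forall v : V, exists j : 'I_d, v \in Own j)
    (Hsucc : forall v : V, exists u : V, E v u)
    (v0 : V) (P0 : {set 'I_d})
    (Hwin : wins1 E Own T (v0, P0, k)) :
  exists s1 : strat1 E d, forall s2 : strat2 E d,
    exists n, n <= #|V| * k.+1 /\ cpos (play Own s1 s2 (v0, P0, k) n) \in T.
Proof.
case Hk: (v0 \in Win E T Own k P0).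
  exists (S1 T Own Hsucc) => s2.
  have [n [Hn HT]] := @sound V E T d Own Hsucc s2 (v0, P0, k) k P0 v0 0 erefl Hk.
  have [Hle _ _] := lvl_spec Hk.
  exists n; split => //.
  rewrite mulnS; move: Hle Hn; set x := #|V| * k; set y := lvl _ _ _ _ _ _; lia.
exfalso.
case: Hwin => s1 Hs1.
have [n Hn] := Hs1 (S2 T Own Hsucc).
have := @complete V E T d Own Hsucc s1 (v0, P0, k) (negbT Hk) n.
set c := play _ _ _ _ _ in Hn *.
rewrite WinE => /negP; apply.
apply: (subsetP (@Al_mono V E T d Own _ _ 0 #|V| (leq0n _))).
exact: Hn.
Qed.
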